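(* The variety $\mathsf{V}(S_{(4,474)})$ is the ai-semiring variety defined by the identities $xy\approx yx$, $x^2y\approx xy$, $xy\approx xy+xyz$.
   Context: An ai-semiring is an algebra $(S,+,\cdot)$ with $(S,+)$ a semilattice, $(S,\cdot)$ a semigroup, and both distributive laws. $\mathsf{V}(S)$ is the variety generated by $S$; ''the ai-semiring variety defined by identities $\Sigma$'' is the class of all ai-semirings satisfying $\Sigma$. $S_{(4,474)}$ has carrier $\{1,2,3,4\}$; addition: $x+x=x$, $2+x=x$, $1+x=1$ for all $x$, $3+4=1$; multiplication (row $a$, column $b$ gives $a\cdot b$): row $1$: $3,2,3,3$; row $2$: $2,2,2,2$; row $3$: $3,2,3,3$; row $4$: $3,2,3,3$. *)

(* Defs.v *)
Record aiSemiring := AiSemiring {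
  carrier :> Type;
  sadd : carrier -> carrier -> carrier;
  smul : carrier -> carrier -> carrier;
  sadd_assoc : forall x y z, sadd x (sadd y z) = sadd (sadd x y) z;
  sadd_comm : forall x y, sadd x y = sadd y x;
  sadd_idem : forall x, sadd x x = x;
  smul_assoc : forall x y z, smul x (smul y z) = smul (smul x y) z;
  smul_addl : forall x y z, smul x (sadd y z) = sadd (smul x y) (smul x z);
  smul_addr : forall x y z, smul (sadd y z) x = sadd (smul y x) (smul z x)
}.

Arguments sadd {a} _ _.
Arguments smul {a} _ _.

Inductive term : Type :=
| Var : nat -> term
| Add : term -> term -> term
| Mul : term -> term -> term.

Fixpoint eval (A : aiSemiring) (v : nat -> A) (t : term) : A :=
  match t with
  | Var n => v n
  | Add t1 t2 => sadd (eval A v t1) (eval A v t2)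
  | Mul t1 t2 => smul (eval A v t1) (eval A v t2)
  end.

Definition satisfies (A : aiSemiring) (u v : term) : Prop :=
  forall val : nat -> A, eval A val u = eval A val v.

(** Membership in the variety V(S) generated by S: A satisfies every identity
    satisfied by S (V(S) = Mod(Id(S)), equivalently HSP(S) by Birkhoff). *)
Definition in_variety_generated_by (S A : aiSemiring) : Prop :=
  forall u v : term, satisfies S u v -> satisfies A u v.

Inductive E4 : Type := e1 | e2 | e3 | e4.

Definition add474 (a b : E4) : E4 :=
  match a, b with
  | e2, x => x
  | x, e2 => x
  | e1, _ => e1
  | _, e1 => e1
  | e3, e3 => e3
  | e4, e4 => e4
  | e3, e4 => e1
  | e4, e3 => e1
  end.

Definition mul474 (a b : E4) : E4 :=
  match a, b with
  | e2, _ => e2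
  | _, e2 => e2
  | _, _ => e3
  end.

Definition S474 : aiSemiring.
Proof.
  refine (@AiSemiring E4 add474 mul474 _ _ _ _ _ _);
    intros; repeat match goal with x : E4 |- _ => destruct x; clear x end;
    reflexivity.
Defined.

(* Main.v *)
Require Import Defs.
From Stdlib Require Import List Classical Arith.
Import ListNotations.

Definition le {A : aiSemiring} (a b : A) := sadd a b = b.

Fixpoint prodL (A : aiSemiring) (v : nat -> A) (a : A) (l : list nat) : A :=
  match l with [] => a | z :: l' => smul a (prodL A v (v z) l') end.

Definition word := (nat * list nat)%type.
Definition ew (A : aiSemiring) (v : nat -> A) (w : word) := prodL A v (v (fst w)) (snd w).
Definition wcat (w1 w2 : word) : word := (fst w1, snd w1 ++ fst w2 :: snd w2).

Fixpoint words (t : term) : list word := match t with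
 | Var n => [(n, [])]
 | Defs.Add t s => words t ++ words s
 | Mul t s => flat_map (fun w1 => map (fun w2 => wcat w1 w2) (words s)) (words t) end.

Lemma prodL_cat A v a l1 b l2 :
  prodL A v a (l1 ++ b :: l2) = smul (prodL A v a l1) (prodL A v (v b) l2).
Proof. revert a; induction l1 as [|z l1 IH]; intros a; simpl; [reflexivity|].
  rewrite IH, smul_assoc. reflexivity. Qed.

Lemma ew_cat (A : aiSemiring) v w1 w2 : ew A v (wcat w1 w2) = smul (ew A v w1) (ew A v w2).
Proof. destruct w1, w2; unfold ew, wcat; simpl. apply prodL_cat. Qed.

Lemma le_trans (A : aiSemiring) (a b c : A) : le a b -> le b c -> le a c.
Proof. unfold le; intros H1 H2. rewrite <- H2, sadd_assoc, H1. reflexivity. Qed.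

Lemma le_join (A : aiSemiring) (a c b : A) : le a b -> le c b -> le (sadd a c) b.
Proof. unfold le; intros H H0. rewrite <- sadd_assoc, H0, H. reflexivity. Qed.

Lemma le_addl (A : aiSemiring) (a b : A) : le a (sadd a b).
Proof. unfold le. rewrite sadd_assoc, sadd_idem. reflexivity. Qed.

Lemma le_addr (A : aiSemiring) (a b : A) : le b (sadd a b).
Proof. rewrite (sadd_comm _ a b). apply le_addl. Qed.

Lemma le_mul (A : aiSemiring) (a a' c c' : A) : le a a' -> le c c' -> le (smul a c) (smul a' c').
Proof. intros H1 H2. apply le_trans with (smul a' c).
  - unfold le. rewrite <- smul_addr, H1. reflexivity.
  - unfold le. rewrite <- smul_addl, H2. reflexivity. Qed.

Lemma words_le (A : aiSemiring) v t w : In w (words t) -> le (ew A v w) (eval A v t).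
Proof.
  revert w; induction t; simpl; intros w H.
  - destruct H as [<-|[]]. unfold le, ew; simpl. apply sadd_idem.
  - apply in_app_or in H; destruct H.
    + eapply le_trans; [apply IHt1; auto| apply le_addl].
    + eapply le_trans; [apply IHt2; auto| apply le_addr].
  - apply in_flat_map in H. destruct H as [w1 [Hw1 H]].
    apply in_map_iff in H. destruct H as [w2 [<- Hw2]].
    rewrite ew_cat. apply le_mul; auto.
Qed.

Lemma words_ub (A : aiSemiring) v t : forall (f : A -> A) b,
  (forall x y, f (sadd x y) = sadd (f x) (f y)) ->
  (forall w, In w (words t) -> le (f (ew A v w)) b) -> le (f (eval A v t)) b.
Proof.
  induction t; simpl; intros f b Hf H.
  - apply (H (n,[])). left; reflexivity.
  - rewrite Hf. apply le_join; [apply IHt1 | apply IHt2]; auto;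
      intros w Hw; apply H; apply in_or_app; auto.
  - change (f (smul (eval A v t1) (eval A v t2)))
      with ((fun y => f (smul (eval A v t1) y)) (eval A v t2)).
    apply IHt2. { intros x y. simpl. rewrite smul_addl; apply Hf. }
    intros w2 Hw2.
    change (f (smul (eval A v t1) (ew A v w2)))
      with ((fun x => f (smul x (ew A v w2))) (eval A v t1)).
    apply IHt1. { intros x y; simpl; rewrite smul_addr; apply Hf. }
    intros w1 Hw1. simpl. rewrite <- ew_cat. apply H. apply in_flat_map.
    exists w1; split; auto. apply in_map_iff. exists w2; auto.
Qed.

Section Key.
Variable A : aiSemiring.
Hypothesis C : forall x y : A, smul x y = smul y x.
Hypothesis Q : forall x y : A, smul (smul x x) y = smul x y.
Hypothesis R : forall x y z : A, smul x y = sadd (smul x y) (smul (smul x y) z).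

Lemma mem_factor v x l y : l <> [] -> In y (x::l) ->
  exists m, prodL A v (v x) l = smul (v y) m.
Proof.
  revert x. induction l as [|z l IH]; intros x Hl Hy; [congruence|]. simpl.
  destruct Hy as [<-|Hy]. { exists (prodL A v (v z) l); reflexivity. }
  destruct l as [|z' l'].
  - destruct Hy as [<-|[]]. simpl. exists (v x). apply C.
  - destruct (IH z) as [m Hm]. discriminate. exact Hy. rewrite Hm.
    exists (smul (v x) m). rewrite !smul_assoc, (C (v x) (v y)). reflexivity.
Qed.

Lemma absorb1 v x l y : l <> [] -> In y (x::l) ->
  smul (v y) (prodL A v (v x) l) = prodL A v (v x) l.
Proof. intros Hl Hy. destruct (mem_factor v x l y Hl Hy) as [m Hm].
  rewrite Hm, smul_assoc, Q. reflexivity. Qed.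

Lemma absorb v x l y l' : l <> [] -> (forall n, In n (y::l') -> In n (x::l)) ->
  smul (prodL A v (v y) l') (prodL A v (v x) l) = prodL A v (v x) l.
Proof.
  revert y; induction l' as [|z l' IH]; intros y Hl Hincl; simpl.
  - apply absorb1; auto. apply Hincl; left; auto.
  - rewrite <- smul_assoc. rewrite (IH z Hl).
    + apply absorb1; auto. apply Hincl; left; auto.
    + intros n Hn; apply Hincl; right; auto.
Qed.

Lemma long_le v y z' l' x l : l <> [] -> incl (y::z'::l') (x::l) ->
  le (prodL A v (v x) l) (prodL A v (v y) (z'::l')).
Proof.
  intros Hl Hi. unfold le.
  pose proof (absorb v x l y (z'::l') Hl Hi) as H.
  pose proof (R (v y) (prodL A v (v z') l') (prodL A v (v x) l)) as HR.
  simpl in H. rewrite H in HR. simpl. rewrite sadd_comm. symmetry. exact HR.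
Qed.
End Key.

Lemma le_mul474 : forall a b : E4, @le S474 (@smul S474 a b) e3.
Proof. intros a b; destruct a, b; reflexivity. Qed.

Lemma prodL_e2 (s : nat -> E4) (a : E4) l :
  (a = e2 \/ exists n, In n l /\ s n = e2) -> prodL S474 s a l = e2.
Proof.
  revert a; induction l as [|z l IH]; intros a [Ha|[n [Hn Hs]]]; cbn [prodL].
  - exact Ha.
  - destruct Hn.
  - subst a. destruct (prodL S474 s (s z) l); reflexivity.
  - destruct Hn as [<-|Hn].
    + rewrite (IH (s z)) by (left; exact Hs). destruct a; reflexivity.
    + rewrite (IH (s z)) by (right; eauto). destruct a; reflexivity.
Qed.

Lemma prodL_ne2 (s : nat -> E4) (a : E4) l : a <> e2 ->
  (forall n, In n l -> s n <> e2) -> prodL S474 s a l <> e2.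
Proof.
  revert a; induction l as [|z l IH]; intros a Ha Hl; cbn [prodL]. exact Ha.
  assert (H : prodL S474 s (s z) l <> e2)
    by (apply IH; [apply Hl; left; auto| intros; apply Hl; right; auto]).
  revert H; destruct (prodL S474 s (s z) l); destruct a; cbn; congruence.
Qed.

Lemma half (A : aiSemiring)
  (C : forall x y : A, smul x y = smul y x)
  (Q : forall x y : A, smul (smul x x) y = smul x y)
  (R : forall x y z : A, smul x y = sadd (smul x y) (smul (smul x y) z))
  u v : satisfies S474 u v -> forall val, le (eval A val v) (eval A val u).
Proof.
  intros Hs val. apply (words_ub A val v (fun a => a)); [reflexivity|].
  intros [x l] Hw. destruct l as [|z l].
  - assert (Hin : In (x, []) (words u)).
    { apply NNPP; intro Hn. pose (s := fun n => if Nat.eqb n x then e4 else e2).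
      assert (H1 : le (ew S474 s (x,[])) (eval S474 s v)) by (apply words_le; auto).
      assert (H2 : le (eval S474 s u) e3).
      { apply (words_ub S474 s u (fun a => a)); [reflexivity|].
        intros [y l'] Hw'. destruct l' as [|z' l'].
        - unfold ew; cbn [prodL fst snd]. unfold s. destruct (Nat.eqb y x) eqn:E.
          + apply Nat.eqb_eq in E; subst; contradiction.
          + reflexivity.
        - unfold ew; cbn [prodL fst snd]. apply le_mul474. }
      rewrite <- (Hs s) in H1. pose proof (le_trans _ _ _ _ H1 H2) as H.
      unfold le, ew in H; cbn [prodL fst snd] in H. unfold s in H.
      rewrite Nat.eqb_refl in H. vm_compute in H. discriminate. }
    exact (words_le A val u _ Hin).
  - assert (Hex : exists y z' l', In (y, z'::l') (words u) /\ incl (y::z'::l') (x::z::l)).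
    { apply NNPP; intro Hn.
      pose (s := fun n => if in_dec Nat.eq_dec n (x::z::l) then e4 else e2).
      assert (H1 : le (ew S474 s (x,z::l)) (eval S474 s v)) by (apply words_le; auto).
      assert (H2 : le (eval S474 s u) e4).
      { apply (words_ub S474 s u (fun a => a)); [reflexivity|].
        intros [y l'] Hw'. destruct l' as [|z' l'].
        - unfold ew; cbn [prodL fst snd]. unfold s. destruct in_dec; reflexivity.
        - assert (Hni : ~ incl (y::z'::l') (x::z::l)) by (intro; apply Hn; eauto).
          assert (Hex : exists n, In n (y::z'::l') /\ ~ In n (x::z::l)).
          { apply NNPP; intro H'; apply Hni; intros n Hn'; apply NNPP; intro; apply H'; eauto. }
          destruct Hex as [n [Hn1 Hn2]].
          assert (Hsn : s n = e2) by (unfold s; destruct in_dec; [contradiction|reflexivity]).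
          unfold ew; cbn [fst snd]. rewrite prodL_e2. reflexivity.
          destruct Hn1 as [<-|Hn1]; [left; exact Hsn| right; eauto]. }
      assert (Hx : s x <> e2) by (unfold s; destruct in_dec as [_|Hc]; [discriminate| exfalso; apply Hc; left; auto]).
      assert (Hp : prodL S474 s (s z) l <> e2).
      { apply prodL_ne2.
        - unfold s; destruct in_dec as [_|Hc]; [discriminate| exfalso; apply Hc; right; left; auto].
        - intros n Hn'. unfold s; destruct in_dec as [_|Hc]; [discriminate| exfalso; apply Hc; right; right; auto]. }
      assert (H3 : @le S474 e3 (eval S474 s v)).
      { unfold ew in H1; cbn [prodL fst snd] in H1. revert H1 Hx Hp.
        destruct (s x); destruct (prodL S474 s (s z) l); intros; try congruence; exact H1. }
      rewrite <- (Hs s) in H3. pose proof (le_trans _ _ _ _ H3 H2) as H.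
      vm_compute in H. discriminate. }
    destruct Hex as [y [z' [l' [Hw' Hincl]]]].
    eapply le_trans; [| apply (words_le A val u _ Hw')].
    unfold ew; cbn [fst snd]. apply long_le; auto. discriminate.
Qed.

Theorem proposition7p1 :
  forall A : aiSemiring,
    in_variety_generated_by S474 A <->
    ((forall x y : A, smul x y = smul y x) /\
     (forall x y : A, smul (smul x x) y = smul x y) /\
     (forall x y z : A, smul x y = sadd (smul x y) (smul (smul x y) z))).
Proof.
  intros A; split.
  - intros H.
    assert (H1 := H (Mul (Var 0) (Var 1)) (Mul (Var 1) (Var 0))
      ltac:(intro val; simpl; destruct (val 0); destruct (val 1); reflexivity)).
    assert (H2 := H (Mul (Mul (Var 0) (Var 0)) (Var 1)) (Mul (Var 0) (Var 1))
      ltac:(intro val; simpl; destruct (val 0); destruct (val 1); reflexivity)).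
    assert (H3 := H (Mul (Var 0) (Var 1))
                    (Defs.Add (Mul (Var 0) (Var 1)) (Mul (Mul (Var 0) (Var 1)) (Var 2)))
      ltac:(intro val; simpl; destruct (val 0); destruct (val 1); destruct (val 2); reflexivity)).
    split; [|split].
    + intros x y; exact (H1 (fun n => match n with 0 => x | _ => y end)).
    + intros x y; exact (H2 (fun n => match n with 0 => x | _ => y end)).
    + intros x y z; exact (H3 (fun n => match n with 0 => x | 1 => y | _ => z end)).
  - intros [C [Q R]] u v Hs val.
    pose proof (half A C Q R u v Hs val) as H1.
    pose proof (half A C Q R v u (fun w => eq_sym (Hs w)) val) as H2.
    unfold le in *. transitivity (sadd (eval A val v) (eval A val u)).
    + symmetry; exact H1.
    + rewrite sadd_comm; exact H2.
Qed.
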